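(* Let a nondegenerate triangle be circumscribed about a central conic one of whose foci coincides with the circumcenter of the triangle. Then the triangle is acute if and only if the conic is an ellipse, and it is obtuse if and only if the conic is a hyperbola.
   Context: A central conic is a non-degenerate ellipse or hyperbola. A triangle is circumscribed about a conic if each of its three sidelines is tangent to the conic. *)

(* Defs.v *)
From HB Require Import structures.
From mathcomp Require Import all_boot all_order all_algebra.
From mathcomp Require Import reals.
Set Implicit Arguments. Unset Strict Implicit. Unset Printing Implicit Defensive.
Import Order.TTheory GRing.Theory Num.Theory.
Local Open Scope ring_scope.

Section Plane.
Variable R : realType.

Definition point := (R * R)%type.

Definition vsub (P Q : point) : point := (P.1 - Q.1, P.2 - Q.2).
Definition pdot (u v : point) : R := u.1 * v.1 + u.2 * v.2.
Definition pcross (u v : point) : R := u.1 * v.2 - u.2 * v.1.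
Definition pdist (P Q : point) : R := Num.sqrt (pdot (vsub P Q) (vsub P Q)).

Definition nondeg_triangle (A B C : point) : Prop := pcross (vsub B A) (vsub C A) != 0.

Definition is_circumcenter (O A B C : point) : Prop :=
  pdist O A = pdist O B /\ pdist O B = pdist O C.

Definition acute (A B C : point) : Prop :=
  [/\ 0 < pdot (vsub B A) (vsub C A), 0 < pdot (vsub A B) (vsub C B)
    & 0 < pdot (vsub A C) (vsub B C)].
Definition obtuse (A B C : point) : Prop :=
  [\/ pdot (vsub B A) (vsub C A) < 0, pdot (vsub A B) (vsub C B) < 0
    | pdot (vsub A C) (vsub B C) < 0].

(* Central conics given by their foci F1 F2 and semi-(major/transverse) axis a *)
Inductive conic :=
| Ellipse of point & point & R
| Hyperbola of point & point & R.

Definition focus1 (K : conic) : point :=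
  match K with Ellipse F _ _ => F | Hyperbola F _ _ => F end.
Definition focus2 (K : conic) : point :=
  match K with Ellipse _ F _ => F | Hyperbola _ F _ => F end.

Definition is_ellipse (K : conic) : Prop := if K is Ellipse _ _ _ then True else False.
Definition is_hyperbola (K : conic) : Prop := if K is Hyperbola _ _ _ then True else False.

Definition central_conic (K : conic) : Prop :=
  match K with
  | Ellipse F1 F2 a => 0 < a /\ pdist F1 F2 < 2 * a
  | Hyperbola F1 F2 a => 0 < a /\ 2 * a < pdist F1 F2
  end.

Definition on_conic (K : conic) (P : point) : Prop :=
  match K with
  | Ellipse F1 F2 a => pdist P F1 + pdist P F2 = 2 * a
  | Hyperbola F1 F2 a => `|pdist P F1 - pdist P F2| = 2 * a
  end.

Definition unitv (u : point) : point :=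
  let n := Num.sqrt (pdot u u) in (u.1 / n, u.2 / n).

(* normal vector of the conic at P: gradient of the focal defining function
   P |-> pdist P F1 + pdist P F2  (ellipse),  P |-> pdist P F1 - pdist P F2 (hyperbola) *)
Definition conic_normal (K : conic) (P : point) : point :=
  match K with
  | Ellipse F1 F2 _ =>
      let u := unitv (vsub P F1) in let v := unitv (vsub P F2) in (u.1 + v.1, u.2 + v.2)
  | Hyperbola F1 F2 _ =>
      let u := unitv (vsub P F1) in let v := unitv (vsub P F2) in (u.1 - v.1, u.2 - v.2)
  end.

Definition on_line (X Y P : point) : Prop := pcross (vsub Y X) (vsub P X) = 0.

Definition tangent_line (K : conic) (X Y : point) : Prop :=
  X != Y /\ exists P, [/\ on_conic K P, on_line X Y P & pdot (conic_normal K P) (vsub Y X) = 0].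

Definition circumscribed (A B C : point) (K : conic) : Prop :=
  [/\ tangent_line K A B, tangent_line K B C & tangent_line K C A].

End Plane.

(* Main.v *)
Require Import Defs.
From HB Require Import structures.
From mathcomp Require Import all_boot all_order all_algebra.
From mathcomp Require Import reals ring lra.
Import Order.TTheory GRing.Theory Num.Theory.
Local Open Scope ring_scope.

Section Helpers.
Variable R : realType.


Lemma gram_id (r x y z : R) :
  8*(r-x)*(r-y)*(r-z)*(r+x+y+z) + 4*r*((r+x-y-z)*(r+y-x-z)*(r+z-x-y))
  = (12*r-4*(x+y+z))*(r^+3+2*x*y*z - r*(x^+2+y^+2+z^+2)).
Proof. ring. Qed.

Lemma sq_pos (u v : R) : (u != 0) || (v != 0) -> 0 < u^+2 + v^+2.
Proof.
case/orP=> h.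
  have := sqr_ge0 v; have : 0 < u^+2 by rewrite lt_def sqr_ge0 andbT expf_neq0.
  lra.
have := sqr_ge0 u; have : 0 < v^+2 by rewrite lt_def sqr_ge0 andbT expf_neq0.
lra.
Qed.

Lemma final_alg (a1 a2 b1 b2 c1 c2 r : R) :
  a1^+2+a2^+2 = r -> b1^+2+b2^+2 = r -> c1^+2+c2^+2 = r -> 0 < r ->
  (b1-a1)*(c2-a2) - (b2-a2)*(c1-a1) != 0 ->
  let s := (a1+b1+c1)^+2+(a2+b2+c2)^+2 in
  let dA := (b1-a1)*(c1-a1)+(b2-a2)*(c2-a2) in
  let dB := (a1-b1)*(c1-b1)+(a2-b2)*(c2-b2) in
  let dC := (a1-c1)*(b1-c1)+(a2-c2)*(b2-c2) in
  (s < r -> [/\ 0 < dA, 0 < dB & 0 < dC]) /\ (r < s -> [\/ dA < 0, dB < 0 | dC < 0]).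
Proof.
move=> ha hb hc r0 nd s dA dB dC.
set x := b1*c1+b2*c2; set y := c1*a1+c2*a2; set z := a1*b1+a2*b2.
have G0 : r^+3+2*x*y*z - r*(x^+2+y^+2+z^+2) = 0.
  have G1 : (a1^+2+a2^+2)*(b1^+2+b2^+2)*(c1^+2+c2^+2) + 2*x*y*z - (a1^+2+a2^+2)*x^+2
     - (b1^+2+b2^+2)*y^+2 - (c1^+2+c2^+2)*z^+2 = 0 by rewrite /x /y /z; ring.
  rewrite ha hb hc in G1; rewrite -G1; ring.
have ES : s - r = 2*(r+x+y+z).
  have -> : s - r = (a1^+2+a2^+2) + (b1^+2+b2^+2) + (c1^+2+c2^+2) + 2*(x+y+z) - r
    by rewrite /s /x /y /z; ring.
  rewrite ha hb hc; ring.
have EA : dA = r + x - y - z.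
  have -> : dA = (a1^+2+a2^+2) + x - y - z by rewrite /dA /x /y /z; ring.
  by rewrite ha.
have EB : dB = r + y - x - z.
  have -> : dB = (b1^+2+b2^+2) + y - x - z by rewrite /dB /x /y /z; ring.
  by rewrite hb.
have EC : dC = r + z - x - y.
  have -> : dC = (c1^+2+c2^+2) + z - x - y by rewrite /dC /x /y /z; ring.
  by rewrite hc.
have nab : 0 < (a1-b1)^+2 + (a2-b2)^+2.
  apply: sq_pos; rewrite -negb_and; apply/negP => /andP[/eqP e1 /eqP e2]; move/eqP: nd; apply.
  have E1 : b1 = a1 by lra. have E2 : b2 = a2 by lra. rewrite E1 E2; ring.
have nbc : 0 < (b1-c1)^+2 + (b2-c2)^+2.
  apply: sq_pos; rewrite -negb_and; apply/negP => /andP[/eqP e1 /eqP e2]; move/eqP: nd; apply.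
  have E1 : c1 = b1 by lra. have E2 : c2 = b2 by lra. rewrite E1 E2; ring.
have nca : 0 < (c1-a1)^+2 + (c2-a2)^+2.
  apply: sq_pos; rewrite -negb_and; apply/negP => /andP[/eqP e1 /eqP e2]; move/eqP: nd; apply.
  have E1 : c1 = a1 by lra. have E2 : c2 = a2 by lra. rewrite E1 E2; ring.
have Hx : 0 < r - x.
  have : (b1-c1)^+2 + (b2-c2)^+2 = 2*(r-x).
    have -> : (b1-c1)^+2 + (b2-c2)^+2 = (b1^+2+b2^+2) + (c1^+2+c2^+2) - 2*x by rewrite /x; ring.
    rewrite hb hc; ring.
  lra.
have Hy : 0 < r - y.
  have : (c1-a1)^+2 + (c2-a2)^+2 = 2*(r-y).
    have -> : (c1-a1)^+2 + (c2-a2)^+2 = (c1^+2+c2^+2) + (a1^+2+a2^+2) - 2*y by rewrite /y; ring.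
    rewrite hc ha; ring.
  lra.
have Hz : 0 < r - z.
  have : (a1-b1)^+2 + (a2-b2)^+2 = 2*(r-z).
    have -> : (a1-b1)^+2 + (a2-b2)^+2 = (a1^+2+a2^+2) + (b1^+2+b2^+2) - 2*z by rewrite /z; ring.
    rewrite ha hb; ring.
  lra.
have KEY := gram_id r x y z.
rewrite G0 mulr0 -EA -EB -EC in KEY.
have M0 : 0 < (r-x)*(r-y)*(r-z) by rewrite !mulr_gt0.
set D := dA*dB*dC in KEY.
have KEY' : 4*r*D = - (8*((r-x)*(r-y)*(r-z))*(r+x+y+z)).
  rewrite /D; move: KEY; rewrite !mulrA => KEY; lra.
split.
  move=> hs.
  have hD : 0 < D.
    have h1 : r + x + y + z < 0 by lra.
    have : 0 < 4*r*D by rewrite KEY' oppr_gt0; nra.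
    nra.
  have sAB : 0 < dA + dB by lra.
  have sBC : 0 < dB + dC by lra.
  have sCA : 0 < dC + dA by lra.
  rewrite /D in hD.
  split.
  - case: (ltrP 0 dA) => // h.
    have h2 : 0 < dB * dC by apply: mulr_gt0; lra.
    rewrite -mulrA in hD; nra.
  - case: (ltrP 0 dB) => // h.
    have h2 : 0 < dA * dC by apply: mulr_gt0; lra.
    have : dA*dB*dC = dB*(dA*dC) by ring.
    nra.
  - case: (ltrP 0 dC) => // h.
    have h2 : 0 < dA * dB by apply: mulr_gt0; lra.
    nra.
move=> hs.
have hD : D < 0.
  have h1 : 0 < r + x + y + z by lra.
  have : 4*r*D < 0 by rewrite KEY' oppr_lt0; nra.
  nra.
rewrite /D in hD.
case: (ltrP dA 0) => hA; first by constructor 1.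
case: (ltrP dB 0) => hB; first by constructor 2.
case: (ltrP dC 0) => hC; first by constructor 3.
have : 0 <= dA*dB*dC by rewrite !mulr_ge0.
lra.
Qed.


Lemma vec0 (w1 w2 d1 d2 : R) : w1 * d1 + w2 * d2 = 0 -> -(w1 * d2) + w2 * d1 = 0 ->
  0 < d1^+2 + d2^+2 -> w1 = 0 /\ w2 = 0.
Proof.
move=> h1 h2 hd.
have e1 : w1  *  (d1^+2+d2^+2) = d1 * (w1 * d1 + w2 * d2) - d2 * (-(w1 * d2) + w2 * d1) by ring.
have e2 : w2  *  (d1^+2+d2^+2) = d2 * (w1 * d1 + w2 * d2) + d1 * (-(w1 * d2) + w2 * d1) by ring.
rewrite h1 h2 !mulr0 subr0 addr0 in e1 e2.
move/eqP: e1; rewrite mulf_eq0 (gt_eqF hd) orbF => /eqP ->.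
by move/eqP: e2; rewrite mulf_eq0 (gt_eqF hd) orbF => /eqP ->.
Qed.

Lemma key (f1 f2 g1 g2 p1 p2 x1 x2 y1 y2 p q e : R) :
 e^+2 = 1 -> 0 < p -> 0 < q ->
 p^+2 = (p1-f1)^+2+(p2-f2)^+2 -> q^+2 = (p1-g1)^+2+(p2-g2)^+2 ->
 0 < (y1-x1)^+2+(y2-x2)^+2 ->
 (y1-x1) * (p2-x2) - (y2-x2) * (p1-x1) = 0 ->
 q * ((p1-f1) * (y1-x1)+(p2-f2) * (y2-x2)) + e * p * ((p1-g1) * (y1-x1)+(p2-g2) * (y2-x2)) = 0 ->
 (f1-x1)^+2+(f2-x2)^+2 = (f1-y1)^+2+(f2-y2)^+2 ->
 (g1-f1)^+2+(g2-f2)^+2 != (q+e * p)^+2 ->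
 (x1+y1-f1-g1)^+2+(x2+y2-f2-g2)^+2 = (q+e * p)^+2.
Proof.
move=> he hp hq Hp Hq hd hl ht heq hne.
set d1 := y1 - x1 in hd hl ht heq *; set d2 := y2 - x2 in hd hl ht heq *.
set U1 := p1 - f1 in Hp ht *; set U2 := p2 - f2 in Hp ht *; set V1 := p1 - g1 in Hq ht *; set V2 := p2 - g2 in Hq ht *.
set Ud := U1 * d1+U2 * d2 in ht *; set Vd := V1 * d1+V2 * d2 in ht *.
set Un := -(U1 * d2)+U2 * d1; set Vn := -(V1 * d2)+V2 * d1.
have E1 : Un^+2 = p^+2 * (d1^+2+d2^+2) - Ud^+2 by rewrite Hp /Un /Ud; ring.
have E2 : Vn^+2 = q^+2 * (d1^+2+d2^+2) - Vd^+2 by rewrite Hq /Vn /Vd; ring.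
have E3 : q * Ud = -(e * p * Vd) by lra.
have Hab : (q * Un)^+2 = (e * p * Vn)^+2.
  have -> : (q * Un)^+2 = q^+2  *  Un^+2 by ring.
  have -> : (e * p * Vn)^+2 = e^+2 * p^+2  *  Vn^+2 by ring.
  rewrite E1 E2 he.
  have -> : q ^+ 2  *  (p ^+ 2  *  (d1 ^+ 2 + d2 ^+ 2) - Ud ^+ 2) =
    q^+2 * p^+2 * (d1 ^+ 2 + d2 ^+ 2) - (q * Ud)^+2 by ring.
  rewrite E3 sqrrN !exprMn he; ring.
have : (q * Un - e * p * Vn)  *  (q * Un + e * p * Vn) = 0 by rewrite -subr_sqr Hab subrr.
move/eqP; rewrite mulf_eq0 => /orP[/eqP hA | /eqP hB].
-
  have hX : (f1-x1) * d1 + (f2-x2) * d2 + (f1-y1) * d1 + (f2-y2) * d2 = 0.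
    have -> : (f1-x1) * d1 + (f2-x2) * d2 + (f1-y1) * d1 + (f2-y2) * d2
       = ((f1-x1)^+2+(f2-x2)^+2) - ((f1-y1)^+2+(f2-y2)^+2) by rewrite /d1 /d2; ring.
    by rewrite heq subrr.
  have [w1 w2] : q * (x1+y1-2 * f1) - q * U1 - e * p * V1 = 0 /\ q * (x2+y2-2 * f2) - q * U2 - e * p * V2 = 0.
  apply: (vec0 _ _ d1 d2).
  + have -> : (q * (x1+y1-2 * f1) - q * U1 - e * p * V1) * d1 + (q * (x2+y2-2 * f2) - q * U2 - e * p * V2) * d2
       = -q * ((f1-x1) * d1 + (f2-x2) * d2 + (f1-y1) * d1 + (f2-y2) * d2) - (q * Ud + e * p * Vd)
       by rewrite /Ud /Vd; ring.
    by rewrite hX E3; ring.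
  + have -> : -((q * (x1+y1-2 * f1) - q * U1 - e * p * V1) * d2) + (q * (x2+y2-2 * f2) - q * U2 - e * p * V2) * d1
       = -2 * q * (d1 * (p2-x2) - d2 * (p1-x1)) + (q * Un - e * p * Vn)
       by rewrite /Un /Vn /U1 /U2 /V1 /V2 /d1 /d2; ring.
    by rewrite hl hA; ring.
  + exact: hd.
  have Z1 : q * (x1+y1-f1-g1) = (q+e * p) * V1.
    have -> : q * (x1+y1-f1-g1) = (q * (x1+y1-2 * f1) - q * U1 - e * p * V1) + (q+e * p) * V1
      by rewrite /U1 /V1; ring.
    by rewrite w1 add0r.
  have Z2 : q * (x2+y2-f2-g2) = (q+e * p) * V2.
    have -> : q * (x2+y2-f2-g2) = (q * (x2+y2-2 * f2) - q * U2 - e * p * V2) + (q+e * p) * V2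
      by rewrite /U2 /V2; ring.
    by rewrite w2 add0r.
  have : q^+2  *  ((x1+y1-f1-g1)^+2+(x2+y2-f2-g2)^+2) = q^+2  *  (q+e * p)^+2.
    have -> : q^+2  *  ((x1+y1-f1-g1)^+2+(x2+y2-f2-g2)^+2) =
       (q * (x1+y1-f1-g1))^+2 + (q * (x2+y2-f2-g2))^+2 by ring.
    rewrite Z1 Z2.
    have -> : ((q + e  *  p)  *  V1) ^+ 2 + ((q + e  *  p)  *  V2) ^+ 2 = (q+e * p)^+2  *  (V1^+2+V2^+2) by ring.
    rewrite -Hq; ring.
  move=> H; apply: (mulfI _ H); by rewrite expf_neq0 // gt_eqF.
-
  have [w1 w2] : q * U1 + e * p * V1 = 0 /\ q * U2 + e * p * V2 = 0.
  apply: (vec0 _ _ d1 d2).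
  + have -> : (q * U1 + e * p * V1) * d1 + (q * U2 + e * p * V2) * d2 = q * Ud + e * p * Vd by rewrite /Ud /Vd; ring.
    by rewrite E3; ring.
  + have -> : -((q * U1 + e * p * V1) * d2) + (q * U2 + e * p * V2) * d1 = q * Un + e * p * Vn by rewrite /Un /Vn; ring.
    exact: hB.
  + exact: hd.
  exfalso; move/eqP: hne; apply.
  have Z1 : q * (g1-f1) = -(q+e * p) * V1.
    have -> : q * (g1-f1) = (q * U1 + e * p * V1) - (q+e * p) * V1 by rewrite /U1 /V1; ring.
    by rewrite w1; ring.
  have Z2 : q * (g2-f2) = -(q+e * p) * V2.
    have -> : q * (g2-f2) = (q * U2 + e * p * V2) - (q+e * p) * V2 by rewrite /U2 /V2; ring.
    by rewrite w2; ring.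
  have : q^+2  *  ((g1-f1)^+2+(g2-f2)^+2) = q^+2  *  (q+e * p)^+2.
    have -> : q^+2  *  ((g1-f1)^+2+(g2-f2)^+2) = (q * (g1-f1))^+2 + (q * (g2-f2))^+2 by ring.
    rewrite Z1 Z2.
    have -> : (-(q + e  *  p)  *  V1) ^+ 2 + (-(q + e  *  p)  *  V2) ^+ 2 = (q+e * p)^+2  *  (V1^+2+V2^+2) by ring.
    rewrite -Hq; ring.
  move=> H; apply: (mulfI _ H); by rewrite expf_neq0 // gt_eqF.
Qed.

Implicit Types (P Q F G X Y : point R).

Lemma dist_sq P Q : pdist P Q ^+ 2 = (P.1-Q.1)^+2 + (P.2-Q.2)^+2.
Proof.
rewrite /pdist sqr_sqrtr /pdot /vsub /=; first ring.
by rewrite addr_ge0 // -expr2 sqr_ge0.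
Qed.

Lemma dist0 P : pdist P P = 0.
Proof. by rewrite /pdist /pdot /vsub !subrr mul0r addr0 sqrtr0. Qed.

Lemma dist_ge0 P Q : 0 <= pdist P Q.
Proof. exact: sqrtr_ge0. Qed.

Lemma dist_sym P Q : pdist P Q = pdist Q P.
Proof. rewrite /pdist /pdot /vsub /=; congr Num.sqrt; ring. Qed.

Lemma dist_eq_sq P Q P' Q' : pdist P Q = pdist P' Q' ->
  (P.1-Q.1)^+2 + (P.2-Q.2)^+2 = (P'.1-Q'.1)^+2 + (P'.2-Q'.2)^+2.
Proof. by move=> h; rewrite -!dist_sq h. Qed.

Lemma dist_pos P Q : pdist P Q = 0 -> P = Q.
Proof.
move=> h; have := dist_sq P Q; rewrite h expr0n /= => h0.
case: P Q h0 {h} => [p1 p2] [q1 q2] /= h0.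
have e1 : (p1 - q1)^+2 = 0 by have := sqr_ge0 (p1-q1); have := sqr_ge0 (p2-q2); lra.
have e2 : (p2 - q2)^+2 = 0 by have := sqr_ge0 (p1-q1); have := sqr_ge0 (p2-q2); lra.
move/eqP: e1; rewrite sqrf_eq0 subr_eq0 => /eqP ->.
by move/eqP: e2; rewrite sqrf_eq0 subr_eq0 => /eqP ->.
Qed.

Lemma tang_core F G P X Y (e : R) :
  e^+2 = 1 -> 0 < pdist P F -> 0 < pdist P G -> X != Y -> on_line X Y P ->
  pdist P G * pdot (vsub P F) (vsub Y X) + e * pdist P F * pdot (vsub P G) (vsub Y X) = 0 ->
  pdist F X = pdist F Y ->
  (G.1-F.1)^+2 + (G.2-F.2)^+2 != (pdist P G + e * pdist P F)^+2 ->
  (X.1+Y.1-F.1-G.1)^+2 + (X.2+Y.2-F.2-G.2)^+2 = (pdist P G + e * pdist P F)^+2.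
Proof.
move=> he hp hq hXY hl hn hd hne.
have Hp := dist_sq P F; have Hq := dist_sq P G; have Hd := dist_eq_sq _ _ _ _ hd.
move: hp hq hn hne Hp Hq; move: (pdist P F) (pdist P G) => p q hp hq hn hne Hp Hq.
move: hXY hl hn hd Hd hne Hp Hq.
case: F G P X Y => [f1 f2] [g1 g2] [p1 p2] [x1 x2] [y1 y2].
rewrite /on_line /pcross /pdot /vsub /= => hXY hl hn _ Hd hne Hp Hq.

apply: (key _ _ _ _ _ _ _ _ _ _ _ _ _ he hp hq Hp Hq) => //.
apply: sq_pos; rewrite -negb_and; apply/negP => /andP[/eqP e1 /eqP e2].
move: hXY; rewrite xpair_eqE negb_and; have -> : y1 = x1 by lra. have -> : y2 = x2 by lra.
by rewrite !eqxx.
Qed.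



Definition semi (K : conic R) : R :=
  match K with Ellipse _ _ a => a | Hyperbola _ _ a => a end.

Lemma tang (K : conic R) F G X Y : central_conic K ->
  ((F = focus1 K /\ G = focus2 K) \/ (F = focus2 K /\ G = focus1 K)) ->
  tangent_line K X Y -> pdist F X = pdist F Y ->
  (X.1+Y.1-F.1-G.1)^+2 + (X.2+Y.2-F.2-G.2)^+2 = (2*semi K)^+2.
Proof.
have sq_lt (u v : R) : 0 <= u -> u < v -> u^+2 < v^+2 by move=> *; nra.
case: K => F1 F2 a /= [a0 hF] hFG [hXY [P [hon hl hn]]] hd.
-
  rewrite /on_conic in hon.
  have hp : 0 < pdist P F1.
    rewrite lt_def dist_ge0 andbT; apply/eqP => /dist_pos E.
    rewrite E dist0 in hon; lra.
  have hq : 0 < pdist P F2.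
    rewrite lt_def dist_ge0 andbT; apply/eqP => /dist_pos E.
    rewrite E dist0 (dist_sym F2 F1) in hon; lra.
  have hN : pdist P F2 * pdot (vsub P F1) (vsub Y X) + pdist P F1 * pdot (vsub P F2) (vsub Y X) = 0.
    have E : pdist P F2 * pdot (vsub P F1) (vsub Y X) + pdist P F1 * pdot (vsub P F2) (vsub Y X)
      = pdist P F1 * pdist P F2 * pdot (conic_normal (Ellipse F1 F2 a) P) (vsub Y X).
      rewrite /conic_normal /unitv -/(pdist P F1) -/(pdist P F2) /pdot /=.
      by field; rewrite (gt_eqF hp) (gt_eqF hq).
    by rewrite E hn mulr0.
  have hF2 : (F2.1-F1.1)^+2 + (F2.2-F1.2)^+2 < (2*a)^+2.
    by rewrite -dist_sq dist_sym; apply: sq_lt => //; exact: dist_ge0.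
  have hF2' : (F1.1-F2.1)^+2 + (F1.2-F2.2)^+2 < (2*a)^+2.
    by rewrite -dist_sq; apply: sq_lt => //; exact: dist_ge0.
  case: hFG => [[? ?]|[? ?]]; subst F G.
  + have -> : 2*a = pdist P F2 + 1 * pdist P F1 by lra.
    apply: (tang_core _ _ _ _ _ 1) => //; first by rewrite expr1n.
      by rewrite mul1r.
    have -> : pdist P F2 + 1 * pdist P F1 = 2*a by lra.
    by rewrite lt_eqF.
  + have -> : 2*a = pdist P F1 + 1 * pdist P F2 by lra.
    apply: (tang_core _ _ _ _ _ 1) => //; first by rewrite expr1n.
      by rewrite mul1r; lra.
    have -> : pdist P F1 + 1 * pdist P F2 = 2*a by lra.
    by rewrite lt_eqF.
-
  rewrite /on_conic in hon.
  have hp : 0 < pdist P F1.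
    rewrite lt_def dist_ge0 andbT; apply/eqP => /dist_pos E.
    rewrite E dist0 sub0r normrN ger0_norm ?dist_ge0 // in hon; lra.
  have hq : 0 < pdist P F2.
    rewrite lt_def dist_ge0 andbT; apply/eqP => /dist_pos E.
    rewrite E dist0 subr0 (dist_sym F2 F1) ger0_norm ?dist_ge0 // in hon; lra.
  have hN : pdist P F2 * pdot (vsub P F1) (vsub Y X) - pdist P F1 * pdot (vsub P F2) (vsub Y X) = 0.
    have E : pdist P F2 * pdot (vsub P F1) (vsub Y X) - pdist P F1 * pdot (vsub P F2) (vsub Y X)
      = pdist P F1 * pdist P F2 * pdot (conic_normal (Hyperbola F1 F2 a) P) (vsub Y X).
      rewrite /conic_normal /unitv -/(pdist P F1) -/(pdist P F2) /pdot /=.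
      by field; rewrite (gt_eqF hp) (gt_eqF hq).
    by rewrite E hn mulr0.
  have hsq : (pdist P F1 - pdist P F2)^+2 = (2*a)^+2.
    by rewrite -hon real_normK // num_real.
  have hF2 : (2*a)^+2 < (F2.1-F1.1)^+2 + (F2.2-F1.2)^+2.
    rewrite -dist_sq dist_sym; apply: sq_lt => //; lra.
  have hF2' : (2*a)^+2 < (F1.1-F2.1)^+2 + (F1.2-F2.2)^+2.
    rewrite -dist_sq; apply: sq_lt => //; lra.
  case: hFG => [[? ?]|[? ?]]; subst F G.
  + have -> : (2*a)^+2 = (pdist P F2 + (-1) * pdist P F1)^+2 by rewrite -hsq; ring.
    apply: (tang_core _ _ _ _ _ (-1)) => //; first by rewrite sqrrN expr1n.
      by rewrite mulN1r mulNr; lra.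
    have -> : (pdist P F2 + (-1) * pdist P F1)^+2 = (2*a)^+2 by rewrite -hsq; ring.
    by rewrite gt_eqF.
  + have -> : (2*a)^+2 = (pdist P F1 + (-1) * pdist P F2)^+2 by rewrite -hsq; ring.
    apply: (tang_core _ _ _ _ _ (-1)) => //; first by rewrite sqrrN expr1n.
      by rewrite mulN1r mulNr; lra.
    have -> : (pdist P F1 + (-1) * pdist P F2)^+2 = (2*a)^+2 by rewrite -hsq; ring.
    by rewrite gt_eqF.
Qed.

Lemma sq_lt' (u v : R) : 0 <= u -> u < v -> u^+2 < v^+2.
Proof. move=> *; nra. Qed.

Lemma focal (K : conic R) F G : central_conic K ->
  ((F = focus1 K /\ G = focus2 K) \/ (F = focus2 K /\ G = focus1 K)) ->
  [/\ 0 < semi K,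
      (is_ellipse K -> (G.1-F.1)^+2+(G.2-F.2)^+2 < (2*semi K)^+2)
    & (is_hyperbola K -> (2*semi K)^+2 < (G.1-F.1)^+2+(G.2-F.2)^+2)].
Proof.
case: K => F1 F2 a /= [a0 hF] hord; split => // _;
  case: hord => [[-> ->]|[-> ->]];
  rewrite -dist_sq ?(dist_sym F2 F1); apply: sq_lt' => //; try exact: dist_ge0; lra.
Qed.

Lemma perp0 (h1 h2 u1 u2 v1 v2 : R) : h1*u1+h2*u2 = 0 -> h1*v1+h2*v2 = 0 ->
  u1*v2-u2*v1 != 0 -> h1 = 0 /\ h2 = 0.
Proof.
move=> e1 e2 nd.
have E1 : h1*(u1*v2-u2*v1) = v2*(h1*u1+h2*u2) - u2*(h1*v1+h2*v2) by ring.
have E2 : h2*(u1*v2-u2*v1) = u1*(h1*v1+h2*v2) - v1*(h1*u1+h2*u2) by ring.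
rewrite e1 e2 !mulr0 subrr in E1 E2.
move/eqP: E1; rewrite mulf_eq0 (negbTE nd) orbF => /eqP ->.
by move/eqP: E2; rewrite mulf_eq0 (negbTE nd) orbF => /eqP ->.
Qed.

End Helpers.

Arguments perp0 {R}. Arguments final_alg {R}.

Theorem corollary2p2 (R : realType) (A B C : point R) (K : conic R) :
  nondeg_triangle A B C ->
  central_conic K ->
  circumscribed A B C K ->
  is_circumcenter (focus1 K) A B C \/ is_circumcenter (focus2 K) A B C ->
  (acute A B C <-> is_ellipse K) /\ (obtuse A B C <-> is_hyperbola K).
Proof.
move=> nd hK [hAB hBC hCA] hcirc.
have [F [G [hord [hFA hFB]]]] : exists F G,
    ((F = focus1 K /\ G = focus2 K) \/ (F = focus2 K /\ G = focus1 K)) /\ is_circumcenter F A B C.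
  by case: hcirc => h; [exists (focus1 K), (focus2 K) | exists (focus2 K), (focus1 K)]; split; auto.
have hFC : pdist F C = pdist F A by rewrite -hFB -hFA.
have e1 := tang _ _ _ _ _ _ hK hord hAB hFA.
have e2 := tang _ _ _ _ _ _ hK hord hBC hFB.
have e3 := tang _ _ _ _ _ _ hK hord hCA hFC.
have q1 := dist_eq_sq _ _ _ _ _ hFA.
have q2 := dist_eq_sq _ _ _ _ _ hFB.
have [s0 hE hH] := focal _ _ _ _ hK hord.
have EA : pdot (vsub B A) (vsub C A) =
   ((B.1-F.1)-(A.1-F.1))*((C.1-F.1)-(A.1-F.1))+((B.2-F.2)-(A.2-F.2))*((C.2-F.2)-(A.2-F.2))
   by rewrite /pdot /vsub /=; ring.
have EB : pdot (vsub A B) (vsub C B) =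
   ((A.1-F.1)-(B.1-F.1))*((C.1-F.1)-(B.1-F.1))+((A.2-F.2)-(B.2-F.2))*((C.2-F.2)-(B.2-F.2))
   by rewrite /pdot /vsub /=; ring.
have EC : pdot (vsub A C) (vsub B C) =
   ((A.1-F.1)-(C.1-F.1))*((B.1-F.1)-(C.1-F.1))+((A.2-F.2)-(C.2-F.2))*((B.2-F.2)-(C.2-F.2))
   by rewrite /pdot /vsub /=; ring.
have ND : ((B.1-F.1)-(A.1-F.1))*((C.2-F.2)-(A.2-F.2)) - ((B.2-F.2)-(A.2-F.2))*((C.1-F.1)-(A.1-F.1)) != 0.
  have -> : ((B.1-F.1)-(A.1-F.1))*((C.2-F.2)-(A.2-F.2)) - ((B.2-F.2)-(A.2-F.2))*((C.1-F.1)-(A.1-F.1))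
    = pcross (vsub B A) (vsub C A) by rewrite /pcross /vsub /=; ring.
  exact: nd.
set r := (2 * semi _ K)^+2 in e1 e2 e3 hE hH.
have r0 : 0 < r by rewrite /r exprn_gt0 // mulr_gt0.
move: EA EB EC ND e1 e2 e3 q1 q2 hE hH.
case: A B C F G {hAB hBC hCA hFA hFB hFC hord nd hcirc} => [A1 A2] [B1 B2] [C1 C2] [F1 F2] [G1 G2] /=.
set a1 := A1 - F1; set a2 := A2 - F2; set b1 := B1 - F1; set b2 := B2 - F2.
set c1 := C1 - F1; set c2 := C2 - F2; set g1 := G1 - F1; set g2 := G2 - F2.
move=> EA EB EC ND e1 e2 e3 q1 q2 hE hH.
have e1' : (a1+b1-g1)^+2 + (a2+b2-g2)^+2 = r by rewrite -e1 /a1 /a2 /b1 /b2 /g1 /g2; ring.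
have e2' : (b1+c1-g1)^+2 + (b2+c2-g2)^+2 = r by rewrite -e2 /c1 /c2 /b1 /b2 /g1 /g2; ring.
have e3' : (c1+a1-g1)^+2 + (c2+a2-g2)^+2 = r by rewrite -e3 /a1 /a2 /c1 /c2 /g1 /g2; ring.
have qab : a1^+2 + a2^+2 = b1^+2 + b2^+2.
  transitivity ((F1 - A1) ^+ 2 + (F2 - A2) ^+ 2); first by rewrite /a1 /a2; ring.
  by rewrite q1 /b1 /b2; ring.
have qbc : b1^+2 + b2^+2 = c1^+2 + c2^+2.
  transitivity ((F1 - B1) ^+ 2 + (F2 - B2) ^+ 2); first by rewrite /b1 /b2; ring.
  by rewrite q2 /c1 /c2; ring.
clearbody a1 a2 b1 b2 c1 c2 g1 g2.
set h1 := a1+b1+c1-g1; set h2 := a2+b2+c2-g2.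
have p1 : h1*(b1-a1) + h2*(b2-a2) = 0.
  have I : 2*(h1*(b1-a1) + h2*(b2-a2)) = ((b1+c1-g1)^+2 + (b2+c2-g2)^+2) - ((c1+a1-g1)^+2 + (c2+a2-g2)^+2)
     - (a1^+2 + a2^+2) + (b1^+2 + b2^+2) by rewrite /h1 /h2; ring.
  rewrite e2' e3' qab in I; lra.
have p2 : h1*(c1-a1) + h2*(c2-a2) = 0.
  have I : 2*(h1*(c1-a1) + h2*(c2-a2)) = ((b1+c1-g1)^+2 + (b2+c2-g2)^+2) - ((a1+b1-g1)^+2 + (a2+b2-g2)^+2)
     - (a1^+2 + a2^+2) + (c1^+2 + c2^+2) by rewrite /h1 /h2; ring.
  rewrite e2' e1' qab qbc in I; lra.
have [z1 z2] := perp0 _ _ _ _ _ _ p1 p2 ND.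
have G1e : g1 = a1+b1+c1 by move: z1; rewrite /h1; lra.
have G2e : g2 = a2+b2+c2 by move: z2; rewrite /h2; lra.
rewrite G1e G2e in e1' hE hH.
have rc : c1^+2 + c2^+2 = r by rewrite -e1'; ring.
have rb : b1^+2 + b2^+2 = r by rewrite qbc.
have ra : a1^+2 + a2^+2 = r by rewrite qab.
have [FE FH] := final_alg _ _ _ _ _ _ _ ra rb rc r0 ND.
rewrite /acute /obtuse EA EB EC.
have excl : forall x y z : R, [/\ 0 < x, 0 < y & 0 < z] -> [\/ x < 0, y < 0 | z < 0] -> False.
  by move=> x y z [hx hy hz] [] ?; lra.
have ek : forall K' : conic R, is_ellipse K' \/ is_hyperbola K' by case=> *; [left|right].
have nb : forall K' : conic R, is_ellipse K' -> is_hyperbola K' -> False by case.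
split; split.
- move=> h; case: (ek K) => // hh; exfalso; exact: excl h (FH (hH hh)).
- by move=> hh; exact: FE (hE hh).
- move=> h; case: (ek K) => // hh; exfalso; exact: excl (FE (hE hh)) h.
- by move=> hh; exact: FH (hH hh).
Qed.
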